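(* Let $-3<\gamma\le1$, $0<\varepsilon\le1$, $\vartheta>0$ sufficiently small and $0<\sigma\le\frac14$, and $\widetilde\vartheta(t)=\vartheta(1+(1+t)^{-\sigma})$. Let $\phi^\varepsilon(t,x)$ satisfy $\sup_{0\le t\le T}\{(1+t)^{5/4}\|\nabla_x\phi^\varepsilon(t)\|_{W^{1,\infty}_x}\}\le\delta$ for a sufficiently small $\delta>0$. Define $\widetilde\nu$ by $$\frac1{\varepsilon^2}\widetilde\nu(t,x,v)=\frac1{\varepsilon^2}\nu(v)+\frac v2\cdot\nabla_x\phi^\varepsilon(t,x)+2\widetilde\vartheta(t)\,v\cdot\nabla_x\phi^\varepsilon(t,x)+\frac{\vartheta\sigma}{(1+t)^{1+\sigma}}|v|^2 .$$ Then, for $0\le t\le T$, $$\frac1{\varepsilon^2}\widetilde\nu\gtrsim\frac1{2\varepsilon^2}\nu(v)+\frac{\langle v\rangle^2}{(1+t)^{1+\sigma}}.$$ In particular, if $-3<\gamma<0$ and $0<\sigma\le\frac1{24}$, then also $$\frac1{\varepsilon^2}\widetilde\nu\gtrsim\varepsilon^{-4/5}(1+t)^{\varrho-1},\qquad\varrho:=\frac{\sigma\gamma+2}{2-\gamma}\in\Big(\frac38,1\Big).$$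
   Context: $\mu(v)=(2\pi)^{-3/2}e^{-|v|^2/2}$, $\langle v\rangle=(1+|v|^2)^{1/2}$, $\nu(v)=\iint_{\mathbb{R}^3\times\mathbb{S}^2}|v-v_*|^\gamma q_0(\theta)\mu(v_* )\mathrm{d}\omega\mathrm{d}v_*$ with $0\le q_0(\theta)\le C|\cos\theta|$ (so $\nu(v)\sim\langle v\rangle^\gamma$). Implicit constants are independent of $\varepsilon$, $t$, $x$, $v$. *)

(* Defs.v *)
From HB Require Import structures.
From mathcomp Require Import all_boot all_order all_algebra.
From mathcomp Require Import all_classical all_reals all_analysis.
Set Implicit Arguments. Unset Strict Implicit. Unset Printing Implicit Defensive.
Import Order.TTheory GRing.Theory Num.Theory.
Import numFieldNormedType.Exports.
Local Open Scope classical_set_scope.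
Local Open Scope ring_scope.

Section Defs.
Variable R : realType.
Implicit Types u w x : 'rV[R]_3.

Definition dot u w : R := \sum_(i < 3) u 0 i * w 0 i.
Definition enorm u : R := Num.sqrt (dot u u).
Definition jbr u : R := Num.sqrt (1 + enorm u ^+ 2).

Definition maxw u : R := (2 * pi) `^ (- (3 / 2)) * expR (- (enorm u ^+ 2) / 2).

(* unit vector omega in S^2 in spherical coordinates (al in [0,pi], be in [0,2pi]) *)
Definition sph (al be : R) : 'rV[R]_3 :=
  \row_(i < 3) [:: sin al * cos be; sin al * sin be; cos al]`_i.

Definition vec3 (a b c : R) : 'rV[R]_3 := \row_(i < 3) [:: a; b; c]`_i.

(* collision frequency
   nu(v) = \iint_{R^3 x S^2} |v - v_*|^gamma q0(theta) mu(v_* ) d omega d v_*,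
   cos theta = omega . (v - v_* ) / |v - v_*|, the surface measure on S^2 being
   sin(al) d al d be in spherical coordinates; written as iterated Lebesgue
   integrals of a nonnegative integrand. *)
Definition nu_coll (gamma : R) (q0 : R -> R) u : R :=
  fine (\int[@lebesgue_measure R]_a \int[@lebesgue_measure R]_b
        \int[@lebesgue_measure R]_c
        \int[@lebesgue_measure R]_(al in (`[0%R, pi]%classic : set R))
        \int[@lebesgue_measure R]_(be in (`[0%R, (2 * pi)%R]%classic : set R))
          ((let w := vec3 a b c in
           enorm (u - w) `^ gamma
           * q0 (acos (dot (sph al be) (u - w) / enorm (u - w)))
           * maxw w * sin al)%R)%:E)%E.

Definition grad (f : 'rV[R]_3 -> R) x : 'rV[R]_3 :=
  \row_(i < 3) ('D_(delta_mx 0 i) f x).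

Definition vth_tilde (vth sigma t : R) : R := vth * (1 + (1 + t) `^ (- sigma)).

(* (1/eps^2) nu~(t,x,v), i.e. the right-hand side of the defining identity *)
Definition nu_tilde_eps (nu : 'rV[R]_3 -> R) (eps vth sigma : R)
  (phi : R -> 'rV[R]_3 -> R) (t : R) x u : R :=
  nu u / eps ^+ 2
  + dot (2^-1 *: u) (grad (phi t) x)
  + 2 * vth_tilde vth sigma t * dot u (grad (phi t) x)
  + vth * sigma / (1 + t) `^ (1 + sigma) * enorm u ^+ 2.

End Defs.

(* Main.v *)
Require Import Defs.
From HB Require Import structures.
From mathcomp Require Import all_boot all_order all_algebra.
From mathcomp Require Import all_classical all_reals all_analysis.
From mathcomp Require Import ring lra.
Import Order.TTheory GRing.Theory Num.Theory.
Import numFieldNormedType.Exports.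
Local Open Scope ring_scope.

Section H.
Variable R : realType.
Implicit Types u w : 'rV[R]_3.

Lemma pRE (a x : R) : 0 < a -> a `^ x = expR (x * ln a).
Proof. by move=> a0; rewrite /powR gt_eqF. Qed.

Lemma dot3 u w : dot u w = u 0 0 * w 0 0 + u 0 1 * w 0 1 + u 0 2%:R * w 0 2%:R.
Proof. rewrite /dot !big_ord_recr big_ord0 /= add0r.
by congr (u 0 _ * w 0 _ + u 0 _ * w 0 _ + u 0 _ * w 0 _); apply: val_inj. Qed.

Lemma dotZ (a : R) u w : dot (a *: u) w = a * dot u w.
Proof. rewrite !dot3 !mxE; ring. Qed.

Lemma dot_ge0 u : 0 <= dot u u.
Proof. rewrite dot3; nra. Qed.

Lemma enorm_ge0 u : 0 <= enorm u.
Proof. exact: sqrtr_ge0. Qed.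

Lemma enorm_sq u : enorm u ^+ 2 = dot u u.
Proof. by rewrite /enorm sqr_sqrtr // dot_ge0. Qed.

Lemma jbr_sq u : jbr u ^+ 2 = 1 + enorm u ^+ 2.
Proof. rewrite /jbr sqr_sqrtr //; have := enorm_ge0 u; nra. Qed.

Lemma CS u w : `|dot u w| <= enorm u * enorm w.
Proof.
have h : dot u w ^+ 2 <= (enorm u * enorm w) ^+ 2.
  rewrite exprMn !enorm_sq !dot3.
  set a := u 0 0; set b := u 0 1; set c := u 0 2%:R.
  set x := w 0 0; set y := w 0 1; set z := w 0 2%:R.
  have e : (a*x+b*y+c*z)^+2 + ((a*y-b*x)^+2 + (a*z-c*x)^+2 + (b*z-c*y)^+2) = (a*a+b*b+c*c)*(x*x+y*y+z*z) by ring.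
  have : 0 <= (a*y-b*x)^+2 + (a*z-c*x)^+2 + (b*z-c*y)^+2 by rewrite !addr_ge0 // sqr_ge0.
  lra.
have h1 := enorm_ge0 u; have h2 := enorm_ge0 w.
have h3 : 0 <= enorm u * enorm w by rewrite mulr_ge0.
rewrite -real_normK ?num_real // in h.
have := normr_ge0 (dot u w); nra.
Qed.


Lemma core1 (N ie iP e g D K vs c1 m c d : R) :
 1 <= ie -> 0 < iP <= 1 -> 0 <= e -> 0 <= g -> g <= d*iP -> `|D| <= e*g ->
 0 <= K <= 5 -> 0 < vs -> 0 < c1 -> 0 < m -> (e < 1 -> c1* m <= N) -> 0 <= N ->
 0 <= c <= 1 -> c <= vs / 4 -> c <= c1* m / 8 -> 0 <= d -> d <= vs / 10 -> d <= c1* m / 20 ->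
 c*(N*ie / 2 + (1+e^+2)*iP) <= N*ie + K*D + vs*iP*e^+2.
Proof.
move=> hie /andP[iP0 iP1] e0 g0 gd hD /andP[K0 K5] vs0 c10 m0 hsm N0 /andP[c0 c1'] cv cm d0 dv dm.
have hDn : - (e*g) <= D.
  have [hd|hd] := lerP 0 D; first by nra.
  by rewrite ltr0_norm // in hD; lra.
have hKD : -(5*(e*(d*iP))) <= K*D.
  have h1 : e*g <= e*(d*iP) by nra.
  have h2 : 0 <= e*g by nra.
  nra.
have hNie : N <= N*ie by nra.
have hNie0 : 0 <= N*ie by nra.
have hc1 : c*(N*ie / 2) <= N*ie / 2 by nra.
have [he|he] := lerP 1 e.
- have h3 : c*((1+e^+2)*iP) <= vs / 2*(e^+2*iP).
    have e2 : 1 <= e^+2 by nra.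
    have : c*(1+e^+2) <= vs / 2*e^+2.
      have : 0 <= (vs / 4 - c) * e^+2 by apply: mulr_ge0; lra.
      have : 0 <= (e^+2 - 1) * c by apply: mulr_ge0; lra.
      lra.
    nra.
  have h4 : 5*(e*(d*iP)) <= vs / 2*(e^+2*iP).
    have : e * d <= e^+2 * (vs / 10).
      have : 0 <= (e^+2 - e) * d by apply: mulr_ge0; nra.
      have : 0 <= e^+2 * (vs / 10 - d) by apply: mulr_ge0; nra.
      lra.
    nra.
  have : 0 <= N*ie / 2 by lra.
  rewrite mulrDr; lra.
- have hN := hsm he.
  have h3 : c*((1+e^+2)*iP) <= c1* m / 4.
    have : (1+e^+2)*iP <= 2 by nra.
    nra.
  have h4 : 5*(e*(d*iP)) <= c1* m / 4.
    have : e*(d*iP) <= d by nra.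
    nra.
  have : 0 <= vs*iP*e^+2 by rewrite !mulr_ge0 // ?sqr_ge0; lra.
  rewrite mulrDr; lra.
Qed.

Lemma mix (w u1 u2 th : R) : 0 <= th <= 1 -> w <= th*u1 + (1-th)*u2 ->
  expR w <= expR u1 + expR u2.
Proof.
move=> /andP[t0 t1] hw.
have [h|h] := lerP u1 u2.
- have : w <= u2 by nra.
  rewrite -ler_expR => h'; have := expR_gt0 u1; lra.
- have : w <= u1 by nra.
  rewrite -ler_expR => h'; have := expR_gt0 u2; lra.
Qed.

End H.

Theorem lemma3p1 (R : realType) (gamma C0 : R) (q0 : R -> R) :
  -3 < gamma <= 1 ->
  (forall th : R, 0 <= q0 th <= C0 * `|cos th|) ->
  (* standing fact from the context: nu(v) ~ <v>^gamma *)
  (exists c1 c2 : R, 0 < c1 /\ 0 < c2 /\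
     forall v : 'rV[R]_3, c1 * jbr v `^ gamma <= nu_coll gamma q0 v <= c2 * jbr v `^ gamma) ->
  forall sigma : R, 0 < sigma <= 4^-1 ->
  exists vth0 : R, 0 < vth0 /\
  forall vth : R, 0 < vth <= vth0 ->
  exists delta c : R, 0 < delta /\ 0 < c /\
  forall (eps T : R) (phi : R -> 'rV[R]_3 -> R),
    0 < eps <= 1 ->
    (forall t x, 0 <= t <= T -> differentiable (phi t) x) ->
    (* sup_{0<=t<=T} (1+t)^(5/4) || grad_x phi(t) ||_{W^{1,oo}} <= delta, with
       ||g||_{W^{1,oo}} = sup |g| + Lipschitz constant of g *)
    (forall t x y z, 0 <= t <= T -> y != z ->
       (1 + t) `^ (5 / 4) *
       (enorm (grad (phi t) x)
        + enorm (grad (phi t) y - grad (phi t) z) / enorm (y - z)) <= delta) ->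
    forall (t : R) (x v : 'rV[R]_3), 0 <= t <= T ->
      c * (nu_coll gamma q0 v / (2 * eps ^+ 2) + jbr v ^+ 2 / (1 + t) `^ (1 + sigma))
        <= nu_tilde_eps (nu_coll gamma q0) eps vth sigma phi t x v
      /\ (gamma < 0 -> sigma <= 24^-1 ->
          let rho := (sigma * gamma + 2) / (2 - gamma) in
          (3 / 8 < rho < 1) /\
          c * (eps `^ (- (4 / 5)) * (1 + t) `^ (rho - 1))
            <= nu_tilde_eps (nu_coll gamma q0) eps vth sigma phi t x v).
Proof.
move=> /andP[g3 g1] _ [c1 [c2 [c1p [c2p Hnu]]]] sg /andP[sg0 sg4].
exists 1; split; first lra.
move=> vth /andP[vt0 vt1].
pose vs := vth * sg. pose m : R := expR (-3).
have vs0 : 0 < vs by rewrite mulr_gt0.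
have m0 : 0 < m by exact: expR_gt0.
pose d := Num.min (vs / 10) (c1 * m / 20).
pose c0 := Num.min 1 (Num.min (vs / 4) (c1 * m / 8)).
pose k := Num.min (c1 / 2) 1.
have hd1 : d <= vs / 10 by rewrite /d ge_min lexx.
have hd2 : d <= c1 * m / 20 by rewrite /d ge_min lexx orbT.
have hd0 : 0 < d by rewrite /d lt_min; apply/andP; split; rewrite ?divr_gt0 ?mulr_gt0.
have hc1 : c0 <= 1 by rewrite /c0 ge_min lexx.
have hc2 : c0 <= vs / 4 by rewrite /c0 !ge_min lexx orbT.
have hc3 : c0 <= c1 * m / 8 by rewrite /c0 !ge_min lexx !orbT.
have hc0 : 0 < c0.
  by rewrite /c0 !lt_min; apply/and3P; split; rewrite ?divr_gt0 ?mulr_gt0.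
have hk1 : k <= c1 / 2 by rewrite /k ge_min lexx.
have hk2 : k <= 1 by rewrite /k ge_min lexx orbT.
have hk0 : 0 < k by rewrite /k lt_min; apply/andP; split; rewrite ?divr_gt0.
exists d, (c0 * k); split => //; split; first by rewrite mulr_gt0.
move=> eps T phi /andP[e0 e1] _ Hphi t x v /andP[t0 tT].
pose G := grad (phi t) x. pose g := enorm G. pose e := enorm v. pose D := dot v G.
pose N := nu_coll gamma q0 v. pose r := jbr v.
pose S := ln (1 + t).
have S0 : 0 <= S by rewrite /S ln_ge0 //; lra.
have g0 : 0 <= g := @enorm_ge0 R G.
have ee0 : 0 <= e := @enorm_ge0 R v.
pose P := (1 + t) `^ (1 + sg).
pose iP := P^-1.
have PE : P = expR ((1 + sg) * S) by rewrite /P (@pRE R _ _) //; lra.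
have iPE : iP = expR (- ((1 + sg) * S)) by rewrite /iP PE expRN.
have P0 : 0 < P by rewrite PE expR_gt0.
have iP0 : 0 < iP by rewrite iPE expR_gt0.
have iP1 : iP <= 1 by rewrite iPE expR_le1; nra.
have hQ : (1 + t) `^ (5 / 4) * g <= d.
  have neq : (0 : 'rV[R]_3) != const_mx 1.
    apply/eqP => /matrixP /(_ 0 0); rewrite !mxE => /eqP; by rewrite eq_sym oner_eq0.
  have := Hphi t x 0 (const_mx 1) (ltac:(by apply/andP; split)) neq.
  have := divr_ge0 (@enorm_ge0 R (grad (phi t) 0 - grad (phi t) (const_mx 1))) (@enorm_ge0 R (0 - const_mx 1)).
  have := powR_ge0 (1 + t) (5 / 4).
  rewrite -/G -/g. nra.
have hPg : P * g <= d.
  have : P <= (1 + t) `^ (5 / 4).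
    rewrite PE (@pRE R _ _); last lra.
    rewrite -/S ler_expR.
    have : 0 <= (5 / 4 - (1 + sg)) * S by apply: mulr_ge0 => //; lra.
    lra.
  nra.
have hgd : g <= d * iP.
  have -> : g = iP * (P * g) by rewrite mulrA mulVf ?mul1r // gt_eqF.
  by rewrite mulrC ler_wpM2r // ltW.
have hD : `|D| <= e * g := @CS R v G.
pose K := 2^-1 + 2 * vth_tilde vth sg t.
have hK : 0 <= K <= 5.
  have h1 : 0 <= (1 + t) `^ (- sg) <= 1.
    rewrite powR_ge0 /= (@pRE R _ _); last lra.
    rewrite -/S expR_le1; nra.
  rewrite /K /vth_tilde; apply/andP; split; nra.
have r2 : r ^+ 2 = 1 + e ^+ 2 := @jbr_sq R v.
have r0 : 0 <= r := sqrtr_ge0 _.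
have r1 : 1 <= r by nra.
have hN : c1 * expR (gamma * ln r) <= N.
  have /andP[+ _] := Hnu v; rewrite -/r -/N (@pRE R r gamma); lra.
have N0 : 0 <= N by have := expR_gt0 (gamma * ln r); nra.
have lr0 : 0 <= ln r := ln_ge0 r1.
have hsm : e < 1 -> c1 * m <= N.
  move=> he.
  have r2' : r < 2 by nra.
  have /eqP er : expR (ln r) == r by rewrite lnK_eq; lra.
  have := expR_ge1Dx (ln r); rewrite er => hl.
  have : m <= expR (gamma * ln r) by rewrite ler_expR; nra.
  nra.
pose ie := (eps ^+ 2)^-1.
have ie1 : 1 <= ie by rewrite /ie invf_ge1 ?exprn_gt0 //; nra.
have Hnt : nu_tilde_eps (nu_coll gamma q0) eps vth sg phi t x v
           = N * ie + K * D + vs * iP * e ^+ 2.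
  rewrite /nu_tilde_eps dotZ -/G -/D -/N -/e /K /ie /iP /vs /P. ring.
have Hl : N / (2 * eps ^+ 2) + jbr v ^+ 2 / (1 + t) `^ (1 + sg)
          = N * ie / 2 + (1 + e ^+ 2) * iP.
  rewrite -/r r2 -/P /ie /iP invfM. ring.
have C1 := @core1 R N ie iP e g D K vs c1 m c0 d ie1 (ltac:(by apply/andP; split)) ee0 g0 hgd hD hK vs0 c1p m0 hsm N0
   (ltac:(by apply/andP; split; lra)) hc2 hc3 (ltac:(lra)) hd1 hd2.
have X0 : 0 <= N * ie / 2 + (1 + e ^+ 2) * iP.
  have : 0 <= N * ie by nra.
  have : 0 <= (1 + e ^+ 2) * iP by nra.
  lra.
split.
  rewrite Hnt Hl. apply: le_trans C1.
  set X := (N * ie / 2 + _).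
  have : 0 <= c0 * (1 - k) * X by rewrite !mulr_ge0 //; lra.
  nra.
move=> gn sg24 rho.
have a0 : 0 < 2 - gamma by lra.
split.
  rewrite /rho; apply/andP; split.
  - rewrite ltr_pdivlMr //.
    have : 0 <= (24^-1 - sg) * (- gamma) by apply: mulr_ge0; lra.
    lra.
  - rewrite ltr_pdivrMr // mul1r.
    have : 0 < (1 + sg) * (- gamma) by apply: mulr_gt0; lra.
    lra.
rewrite Hnt.
pose L := ln eps.
have L0 : L <= 0 by rewrite /L ln_le0.
pose lr := ln r.
have /eqP epsE : expR L == eps by rewrite lnK_eq.
have /eqP rE : expR lr == r by rewrite lnK_eq; lra.
have ieE : ie = expR (- (2 * L)) by rewrite /ie -{1}epsE -expRM_natl expRN.
have r2' : r ^+ 2 = expR (2 * lr) by rewrite -{1}rE -expRM_natl.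
pose u1 := gamma * lr - 2 * L.
pose u2 := 2 * lr - (1 + sg) * S.
pose w := - (4 / 5) * L + (rho - 1) * S.
pose th := 2 / (2 - gamma).
have th0 : 0 <= th <= 1.
  apply/andP; split; first by rewrite divr_ge0 //; lra.
  rewrite /th ler_pdivrMr // mul1r; lra.
have hw : w <= th * u1 + (1 - th) * u2.
  have E : th * u1 + (1 - th) * u2 - w = (- L) * (4 / (2 - gamma) - 4 / 5).
    rewrite /th /u1 /u2 /w /rho. field. lra.
  have : 4 / 5 <= 4 / (2 - gamma) by rewrite ler_pdivlMr //; lra.
  have : 0 <= - L by lra.
  nra.
have Hm := @mix R w u1 u2 th th0 hw.
have Eu1 : expR u1 = expR (gamma * lr) * ie by rewrite /u1 ieE -expRD.
have Eu2 : expR u2 = (1 + e ^+ 2) * iP by rewrite /u2 iPE -r2 r2' -expRD.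
have Ew : eps `^ (- (4 / 5)) * (1 + t) `^ (rho - 1) = expR w.
  rewrite (@pRE R eps) // (@pRE R (1 + t)); last lra.
  by rewrite -/S -/L -expRD.
rewrite Ew; apply: le_trans C1.
have hk : k * (expR u1 + expR u2) <= N * ie / 2 + (1 + e ^+ 2) * iP.
  rewrite Eu1 -Eu2.
  have h1 : k * (expR (gamma * lr) * ie) <= N * ie / 2.
    have : k * expR (gamma * lr) <= N / 2.
      have := expR_gt0 (gamma * lr). rewrite /lr in hN *. nra.
    have : 0 <= ie by lra.
    nra.
  have h2 : k * expR u2 <= expR u2 by have := expR_gt0 u2; nra.
  rewrite mulrDr; lra.
have h3 : k * expR w <= N * ie / 2 + (1 + e ^+ 2) * iP.
  by apply: le_trans hk; rewrite ler_pM2l //.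
have : 0 <= c0 * (N * ie / 2 + (1 + e ^+ 2) * iP - k * expR w).
  by apply: mulr_ge0; lra.
lra.
Qed.
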